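(* Let $n>k\ge 1$ be integers, not both even, such that $n\neq Mk$ for every positive integer $M$ (i.e. $k$ does not divide $n$). Let $\alpha=\lceil n/2\rceil-\lfloor (n-k)/2\rfloor$, $\beta=k-\alpha$, and $G=\sqrt{n/k}\,W_n^H\Sigma W_k$. Let $G_k$ be any $k\times k$ submatrix of $G$ formed by $k$ distinct rows of $G$. Then the smallest eigenvalue of $G_kG_k^H$ is strictly less than $1$ and the largest eigenvalue of $G_kG_k^H$ is strictly greater than $1$.
   Context: For a positive integer $l$, $W_l$ denotes the unitary $l\times l$ DFT matrix, $(W_l)_{r,s}=\frac{1}{\sqrt l}e^{-j2\pi(r-1)(s-1)/l}$, and $^H$ denotes conjugate transpose. $\Sigma$ is the $n\times k$ matrix $\begin{pmatrix} I_\alpha & 0\\ 0 & 0\\ 0 & I_\beta\end{pmatrix}$: its first $\alpha$ rows are $(I_\alpha\ 0)$, its last $\beta$ rows are $(0\ I_\beta)$, and its middle $n-k$ rows are zero. *)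

(* Defs.v *)
From HB Require Import structures.
From mathcomp Require Import all_boot all_order all_algebra.
From mathcomp Require Import complex.
From mathcomp Require Import all_classical all_reals.
From mathcomp Require Import trigo.
Set Implicit Arguments. Unset Strict Implicit. Unset Printing Implicit Defensive.
Import Order.TTheory GRing.Theory Num.Theory ComplexField.
Local Open Scope ring_scope.
Local Open Scope complex_scope.

Definition adjmx (R : rcfType) (m p : nat) (A : 'M[R[i]]_(m, p)) : 'M[R[i]]_(p, m) :=
  map_mx Num.conj A^T.

Definition dft (R : realType) (l : nat) : 'M[R[i]]_l :=
  \matrix_(r < l, s < l)
    let th : R := 2 * pi * (r%:R * s%:R) / l%:R in
    ((Num.sqrt (l%:R : R))^-1)%:C * ((cos th)%:C - 'i * (sin th)%:C).

Definition alphaD (n k : nat) : nat := uphalf n - (n - k)./2.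
Definition betaD (n k : nat) : nat := k - alphaD n k.

(* Sigma : n x k, first alpha rows (I_alpha 0), last beta rows (0 I_beta), middle zero *)
Definition Sigma (R : rcfType) (n k : nat) : 'M[R[i]]_(n, k) :=
  \matrix_(r < n, c < k)
    (((r < alphaD n k)%N && (c == r :> nat))
     || ((n - betaD n k <= r)%N && (c + (n - k) == r)%N))%:R.

Definition Gmx (R : realType) (n k : nat) : 'M[R[i]]_(n, k) :=
  (Num.sqrt (n%:R / k%:R : R))%:C *: (adjmx (dft R n) *m Sigma R n k *m dft R k).

(* Main.v *)
Require Import Defs.
From HB Require Import structures.
From mathcomp Require Import all_boot all_order all_algebra.
From mathcomp Require Import complex.
From mathcomp Require Import all_classical all_reals.
From mathcomp Require Import trigo.
From mathcomp Require Import ring lra zify.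
Import Order.TTheory GRing.Theory Num.Theory ComplexField.
Set Implicit Arguments. Unset Strict Implicit. Unset Printing Implicit Defensive.

Lemma comb n k (f : 'I_k -> 'I_n) : injective f -> (0 < k)%N -> (k < n)%N ->
  (forall M : nat, (0 < M)%N -> n <> (M * k)%N) ->
  ~ (forall i j, f i * k = f j * k %[mod n]).
Proof.
move=> finj k0 kn ndiv H.
set g := gcdn n k.
have g0 : (0 < g)%N by rewrite gcdn_gt0 k0 orbT.
set n' := n %/ g.
have nE : n = (n' * g)%N by rewrite /n' divnK // dvdn_gcdl.
have n'0 : (0 < n')%N by move: nE kn; case: n' => //= ->; rewrite mul0n.
have key : forall i j : 'I_k, (f j <= f i)%N -> n' %| f i - f j.
  move=> i j le; have /eqP := H i j.
  rewrite eqn_mod_dvd ?leq_mul2r ?le ?orbT // -mulnBl => h.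
  have : n %| (f i - f j) * g.
    by rewrite /g gcdnC muln_gcdr dvdn_gcd h /= dvdn_mull.
  by rewrite {1}nE dvdn_pmul2r.
have modeq : forall i j, f i %% n' = f j %% n'.
  move=> i j; case/orP: (leq_total (f j) (f i)) => le.
    by apply/eqP; rewrite eqn_mod_dvd // key.
  by apply/esym/eqP; rewrite eqn_mod_dvd // key.
have hlt : forall i, (f i %/ n' < g)%N.
  by move=> i; rewrite ltn_divLR // mulnC -nE.
pose h (i : 'I_k) : 'I_g := Ordinal (hlt i).
have hinj : injective h.
  move=> i j /(congr1 val) /= e; apply: finj; apply: ord_inj.
  by rewrite (divn_eq (f i) n') (divn_eq (f j) n') e (modeq i j).
have := leq_card h hinj; rewrite !card_ord => kg.
have gk : (g <= k)%N by apply: dvdn_leq; rewrite // dvdn_gcdr.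
have gkE : g = k by apply/eqP; rewrite eqn_leq gk kg.
have kn' : k %| n by rewrite -gkE dvdn_gcdl.
apply: (ndiv (n %/ k)); first by rewrite divn_gt0 // ltnW.
by rewrite divnK.
Qed.

Local Open Scope ring_scope.
Local Open Scope complex_scope.

Section Expo.
Variable R : realType.
Definition ex (t : R) : R[i] := (cos t)%:C + 'i * (sin t)%:C.

Lemma exE t : ex t = (cos t) +i* (sin t).
Proof. by rewrite /ex; apply/eqP; rewrite eq_complex /=; simpc. Qed.

Lemma exD x y : ex (x + y) = ex x * ex y.
Proof. rewrite !exE cosD sinD; apply/eqP; rewrite eq_complex /=; apply/andP; split; apply/eqP; ring. Qed.

Lemma ex0 : ex 0 = 1.
Proof. by rewrite exE cos0 sin0. Qed.

Lemma exMn (t : R) m : ex (t *+ m) = ex t ^+ m.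
Proof. elim: m => [|m IH]; first by rewrite mulr0n ex0 expr0.
by rewrite mulrS exD IH exprS. Qed.

Lemma ex_conj t : Num.conj (ex t) = (cos t)%:C - 'i * (sin t)%:C.
Proof. by rewrite exE /=; apply/eqP; rewrite eq_complex /=; simpc. Qed.

Lemma ex_conjM t : Num.conj (ex t) * ex t = 1.
Proof. rewrite exE /=; apply/eqP; rewrite eq_complex /=; simpc.
by rewrite -!expr2 cos2Dsin2 eqxx /= mulrC subrr. Qed.

Lemma ex_neq1 t : 0 < t < pi *+ 2 -> ex t != 1.
Proof.
move=> /andP[t0 t2]; rewrite exE; apply/negP => /eqP [c s].
have [tpi|tpi|tpi] := ltgtP t pi.
- by have := @sin_gt0_pi R t; rewrite t0 tpi s ltxx => /(_ isT).
- have : 0 < sin (t - pi).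
    by apply: sin_gt0_pi; apply/andP; split; rewrite ?subr_gt0 // ltrBlDr -mulr2n.
  have -> : sin (t - pi) = - sin t.
    by have := sinDpi (t - pi); rewrite subrK => ->; rewrite opprK.
  by rewrite s oppr0 ltxx.
- by move: c; rewrite tpi cospi => /eqP; rewrite -subr_eq0 -opprD oppr_eq0 -(natrD _ 1 1) pnatr_eq0.
Qed.
End Expo.


Section Omega.
Variable R : realType.
Definition om (l : nat) : R[i] := ex (pi *+ 2 / l%:R).

Lemma om_exp l m : om l ^+ m = ex ((pi *+ 2 / l%:R) *+ m).
Proof. by rewrite exMn. Qed.

Lemma om_prim l : (0 < l)%N -> l.-primitive_root (om l).
Proof.
move=> l0; apply/andP; split => //; apply/forallP => i; apply/eqP.
rewrite unity_rootE om_exp.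
have lR : (l%:R : R) != 0 by rewrite pnatr_eq0 -lt0n.
case: (ltngtP i.+1 l) => [il|h|->].
- rewrite (negbTE (ex_neq1 _)) ?(negbTE (ltn_eqF il)) //.
  have lgt : (0 : R) < l%:R by rewrite ltr0n.
  have pi0 := @pi_gt0 R.
  apply/andP; split.
    by rewrite pmulrn_rgt0 // divr_gt0 // pmulrn_rgt0.
  rewrite -mulr_natr -mulrA gtr_pMr; last by rewrite pmulrn_rgt0.
  by rewrite mulrC ltr_pdivrMr // mul1r ltr_nat.
- by have := ltn_ord i; lia.
- rewrite -mulr_natr mulfVK // exE.
  by rewrite cos2pi sin2pi eqxx.
Qed.

Lemma dftE l (r s : 'I_l) : dft R l r s =
  ((Num.sqrt (l%:R : R))^-1)%:C * Num.conj (om l ^+ (r * s)).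
Proof.
rewrite /dft mxE om_exp ex_conj /=.
have -> : 2 * pi * ((r : nat)%:R * (s : nat)%:R) / l%:R = pi *+ 2 / l%:R *+ (r * s) :> R.
  by move: (pi : R) => p; ring.
by [].
Qed.
End Omega.


Section Unit.
Variable R : realType.
Local Notation C := (R[i]).

Lemma conjR (x : R) : Num.conj (x%:C : C) = x%:C.
Proof. by rewrite conj_Creal // complex_real. Qed.

Lemma adjmxE m p (A : 'M[C]_(m, p)) i j : adjmx A i j = Num.conj (A j i).
Proof. by rewrite /adjmx !mxE. Qed.

Lemma gsum0 (x : C) m : x ^+ m = 1 -> x != 1 -> \sum_(s < m) x ^+ s = 0.
Proof.
move=> xm x1; have := subrX1 x m; rewrite xm subrr => /esym /eqP.
by rewrite mulf_eq0 subr_eq0 (negbTE x1) /= => /eqP.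
Qed.

Lemma om_unit l a : Num.conj (om R l ^+ a) * om R l ^+ a = 1.
Proof. by rewrite om_exp ex_conjM. Qed.

Definition xx l a b : C := Num.conj (om R l ^+ a) * om R l ^+ b.

Lemma xxX l a b m : xx l a b ^+ m = xx l (a * m) (b * m).
Proof. by rewrite /xx exprMn -rmorphXn -!exprM. Qed.

Lemma xx1 l a b : (0 < l)%N -> (xx l a b == 1) = (a == b %[mod l]).
Proof.
move=> l0; rewrite -(eq_prim_root_expr (om_prim R l0)) /xx.
apply/eqP/eqP => [h|->]; last exact: om_unit.
by rewrite -[om R l ^+ a]mulr1 -h mulrA (mulrC (om R l ^+ a)) om_unit mul1r.
Qed.

Lemma xx_l l a b : (0 < l)%N -> xx l a b ^+ l = 1.
Proof.
move=> l0; rewrite xxX /xx mulnC (mulnC b) !exprM !(prim_expr_order (om_prim R l0)) !expr1n.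
by rewrite rmorph1 mulr1.
Qed.

Lemma sqrt_inv2 l : (0 < l)%N -> ((Num.sqrt (l%:R : R))^-1) ^+ 2 = (l%:R)^-1.
Proof. by move=> l0; rewrite exprVn sqr_sqrtr // ler0n. Qed.

Lemma dft_unit l : (0 < l)%N -> dft R l *m adjmx (dft R l) = 1%:M.
Proof.
move=> l0; apply/matrixP => r t; rewrite !mxE.
set c := (Num.sqrt (l%:R : R))^-1.
transitivity (\sum_(s < l) (c ^+ 2)%:C * xx l r t ^+ s).
  apply: eq_bigr => s _; rewrite adjmxE !dftE xxX /xx rmorphM /= conjR conjCK.
  rewrite rmorphXn /=; ring.
rewrite -mulr_sumr; case: eqP => [<-|/eqP rt].
  have -> : xx l r r = 1 by rewrite /xx om_unit.
  under eq_bigr do rewrite expr1n.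
  rewrite sumr_const card_ord /c sqrt_inv2 //.
  by rewrite -(rmorph_nat (real_complex R)) -rmorphM /= mulVf // pnatr_eq0 -lt0n.
rewrite gsum0 ?mulr0 ?xx_l // xx1 // !modn_small //.
Qed.
End Unit.


Section SumS.
Variable R : realType.
Local Notation C := (R[i]).

Lemma sumS (x : C) n a b : (a + b <= n)%N -> x ^+ n = 1 ->
  x ^+ b * \sum_(s < n) ((s < a) || (n - b <= s))%N%:R * x ^+ s = \sum_(t < a + b) x ^+ t.
Proof.
move=> abn xn.
rewrite -(big_mkord xpredT (fun s => ((s < a) || (n - b <= s))%N%:R * x ^+ s)).
rewrite (big_cat_nat (n := a)) /=; [|lia|lia].
rewrite (big_cat_nat (n := n - b) (m := a)) /=; [|lia|lia].
have -> : \sum_(0 <= i < a) ((i < a) || (n - b <= i))%N%:R * x ^+ i = \sum_(0 <= i < a) x ^+ i.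
  by apply: eq_big_nat => i /andP[_ ia]; rewrite ia mul1r.
have -> : \sum_(a <= i < n - b) ((i < a) || (n - b <= i))%N%:R * x ^+ i = 0.
  rewrite big1_seq // => i /andP[_]; rewrite mem_iota => /andP[h1 h2].
  have -> : ((i < a) || (n - b <= i))%N = false by lia.
  by rewrite mul0r.
have -> : \sum_(n - b <= i < n) ((i < a) || (n - b <= i))%N%:R * x ^+ i =
          \sum_(0 <= i < b) x ^+ (i + (n - b)).
  rewrite -[X in \sum_(X <= _ < _) _](add0n (n - b)%N) big_addn; have -> : (n - (n - b) = b)%N by lia.
  by apply: eq_big_nat => i /andP[_ ib]; rewrite (_ : (n - b <= i + (n - b))%N) ?orbT ?mul1r //; lia.
rewrite add0r mulrDr !mulr_sumr.
rewrite -(big_mkord xpredT) [in RHS](big_cat_nat (n := b)) /=; [|lia|lia].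
rewrite addrC; congr (_ + _).
  have -> : \sum_(b <= i < a + b) x ^+ i = \sum_(0 <= i < a) x ^+ (i + b).
    by rewrite -{1}[b]add0n big_addn addnK.
  by apply: eq_big_nat => i _; rewrite -exprD addnC.
apply: eq_big_nat => i /andP[_ ib].
rewrite -exprD (_ : (b + (i + (n - b)) = i + n)%N); last by lia.
by rewrite exprD xn mulr1.
Qed.
End SumS.


Lemma alpha_le n k : (1 <= k)%N -> (k < n)%N -> (alphaD n k <= k)%N.
Proof. rewrite /alphaD => *; lia. Qed.

Definition inS n k (s : nat) : bool := (s < alphaD n k)%N || (n - betaD n k <= s)%N.

Section Sig.
Variable R : realType.
Local Notation C := (R[i]).

Lemma SigmaSigma n k : (1 <= k)%N -> (k < n)%N ->
  Sigma R n k *m adjmx (Sigma R n k) = diag_mx (\row_s (inS n k s)%:R).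
Proof.
move=> k1 kn; have ak := alpha_le k1 kn.
apply/matrixP => s t; rewrite !mxE.
under eq_bigr do rewrite adjmxE !mxE conjC_nat -natrM mulnb.
rewrite /inS /betaD; move: (alphaD n k) ak => a ak.
set g := if (s < a)%N then (s : nat) else (s - (n - k))%N.
have key : forall c : 'I_k,
  ((s < a) && (c == s :> nat) || (n - (k - a) <= s) && (c + (n - k) == s))%N &&
  ((t < a) && (c == t :> nat) || (n - (k - a) <= t) && (c + (n - k) == t))%N =
  [&& (s == t :> nat), ((s < a) || (n - (k - a) <= s))%N & (c == g :> nat)].
  move=> c; have := ltn_ord c; have := ltn_ord s; have := ltn_ord t; rewrite /g.
  case: ifP => h; lia.
under eq_bigr do rewrite key.
case: (boolP [&& (s == t :> nat) & ((s < a) || (n - (k - a) <= s))%N]) => [/andP[st sS]|h].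
  have gk : (g < k)%N by rewrite /g; case: ifP => h; have := ltn_ord s; lia.
  rewrite (bigD1 (Ordinal gk)) //= st sS eqxx /= big1 ?addr0 //.
    by rewrite val_eqE in st; rewrite -(eqP st) eqxx mulr1n.
  by move=> c /negbTE; rewrite -val_eqE /= => ->; rewrite ?andbF.
rewrite big1; last first.
  move=> c _; apply/eqP; rewrite pnatr_eq0 eqb0; apply: contra h => /and3P[-> -> _] //.
case: (eqVneq s t) h => [-> /= h|st _]; last by rewrite mulr0n.
by rewrite eqxx /= in h; rewrite (negbTE h).
Qed.
End Sig.


Section GG.
Variable R : realType.
Local Notation C := (R[i]).

Lemma adjmx_mul m p q (A : 'M[C]_(m, p)) (B : 'M[C]_(p, q)) :
  adjmx (A *m B) = adjmx B *m adjmx A.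
Proof. by rewrite /adjmx trmx_mul map_mxM. Qed.

Lemma adjmxZ m p (a : C) (A : 'M[C]_(m, p)) : adjmx (a *: A) = Num.conj a *: adjmx A.
Proof. by apply/matrixP => i j; rewrite !mxE rmorphM. Qed.

Lemma adjmxK m p (A : 'M[C]_(m, p)) : adjmx (adjmx A) = A.
Proof. by apply/matrixP => i j; rewrite !adjmxE conjCK. Qed.

Lemma GGE n k (a b : 'I_n) : (1 <= k)%N -> (k < n)%N ->
  (Gmx R n k *m adjmx (Gmx R n k)) a b =
  ((Num.sqrt (n%:R / k%:R : R)) ^+ 2 * (Num.sqrt (n%:R : R))^-1 ^+ 2)%:C *
  \sum_(s < n) (inS n k s)%:R * xx R n b a ^+ s.
Proof.
move=> k1 kn.
rewrite /Gmx adjmxZ conjR -scalemxAl -scalemxAr scalerA !adjmx_mul adjmxK.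
set A := adjmx (dft R n); set S := Sigma R n k; set W := dft R k.
rewrite !mulmxA -(mulmxA (A *m S)) dft_unit // mulmx1 -(mulmxA A) SigmaSigma //.
rewrite mxE mul_mx_diag mxE !mulr_sumr; apply: eq_bigr => s _.
rewrite mxE /A adjmxE !dftE mxE xxX /xx rmorphM /= conjR conjCK (mulnC b) (mulnC a).
rewrite [in RHS]rmorphM /= [in RHS]rmorphXn /= [in RHS]rmorphXn /=; ring.
Qed.
End GG.


Section LA.
Variable R : realType.
Local Notation C := (R[i]).

Lemma herm_sq0 m (Q : 'M[C]_m) : adjmx Q = Q -> Q *m Q = 0 -> Q = 0.
Proof.
move=> hQ QQ; apply/matrixP => i j; rewrite mxE.
have : (Q *m adjmx Q) i i == 0 by rewrite hQ QQ mxE.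
rewrite mxE psumr_eq0; last by move=> l _; rewrite adjmxE mul_conjC_ge0.
move=> /allP /(_ j (mem_index_enum _)) /=.
by rewrite adjmxE mul_conjC_eq0 => /eqP.
Qed.

Lemma herm_exp m (Q : 'M[C]_m.+1) e : adjmx Q = Q -> adjmx (Q ^+ e) = Q ^+ e.
Proof.
move=> hQ; elim: e => [|e IH].
  by rewrite !expr0; apply/matrixP => i j; rewrite adjmxE !mxE rmorph_nat eq_sym.
by rewrite exprS -mulmxE adjmx_mul IH hQ mulmxE -exprSr exprS.
Qed.

Lemma herm_nil m (Q : 'M[C]_m.+1) e : adjmx Q = Q -> Q ^+ e.+1 = 0 -> Q = 0.
Proof.
move=> hQ; elim: e => [|e IH]; first by rewrite expr1.
move=> h; apply: IH; apply: herm_sq0; first exact: herm_exp.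
by rewrite mulmxE -exprD (_ : (e.+1 + e.+1 = e.+2 + e)%N) ?exprD ?h ?mul0r //; lia.
Qed.

Lemma herm_real m (P : 'M[C]_m) a : adjmx P = P -> eigenvalue P a -> Num.conj a = a.
Proof.
move=> hP /eigenvalueP [v vP v0].
set t := (v *m adjmx v) 0 0.
have tJ : Num.conj t = t.
  by rewrite /t -adjmxE adjmx_mul adjmxK.
have t0 : t != 0.
  apply: contra v0 => /eqP; rewrite /t mxE => /eqP.
  rewrite psumr_eq0; last by move=> l _; rewrite adjmxE mul_conjC_ge0.
  move=> /allP h; apply/eqP/matrixP => i j; rewrite (ord1 i) mxE.
  by have := h j (mem_index_enum _); rewrite /= adjmxE mul_conjC_eq0 => /eqP.
have e1 : (v *m P *m adjmx v) 0 0 = a * t by rewrite vP -scalemxAl mxE.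
have e2 : Num.conj ((v *m P *m adjmx v) 0 0) = (v *m P *m adjmx v) 0 0.
  by rewrite -adjmxE !adjmx_mul adjmxK hP mulmxA.
move: e2; rewrite e1 rmorphM /= tJ => /eqP; rewrite -subr_eq0 -mulrBl mulf_eq0 (negbTE t0) orbF.
by rewrite subr_eq0 => /eqP.
Qed.

Lemma seq_min (s : seq C) : s != [::] -> all (fun x => x \is Num.real) s ->
  exists2 x, x \in s & forall y, y \in s -> x <= y.
Proof.
elim: s => [//|a s IH] _ /= /andP[ar sr].
case: (eqVneq s [::]) => [->|sn].
  by exists a; rewrite ?mem_head // => y; rewrite inE => /eqP ->.
have [x xs xm] := IH sn sr.
have xr : x \is Num.real by apply: (allP sr).
case/orP: (real_leVge ar xr) => h.
  exists a; first exact: mem_head.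
  by move=> y; rewrite inE => /orP[/eqP ->//|/xm]; apply: le_trans.
exists x; first by rewrite inE xs orbT.
by move=> y; rewrite inE => /orP[/eqP ->//|/xm].
Qed.

Lemma seq_max (s : seq C) : s != [::] -> all (fun x => x \is Num.real) s ->
  exists2 x, x \in s & forall y, y \in s -> y <= x.
Proof.
elim: s => [//|a s IH] _ /= /andP[ar sr].
case: (eqVneq s [::]) => [->|sn].
  by exists a; rewrite ?mem_head // => y; rewrite inE => /eqP ->.
have [x xs xm] := IH sn sr.
have xr : x \is Num.real by apply: (allP sr).
case/orP: (real_leVge ar xr) => h.
  exists x; first by rewrite inE xs orbT.
  by move=> y; rewrite inE => /orP[/eqP ->//|/xm].
exists a; first exact: mem_head.
by move=> y; rewrite inE => /orP[/eqP ->//|/xm] => yx; apply: le_trans h.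
Qed.
End LA.


Section LA2.
Variable R : realType.
Local Notation C := (R[i]).

Lemma LA m (P : 'M[C]_m.+1) : adjmx P = P -> (forall i, P i i = 1) ->
  (exists i j, i != j /\ P i j != 0) ->
  (exists lmin : C, eigenvalue P lmin /\
     (forall mu, eigenvalue P mu -> lmin <= mu) /\ lmin < 1) /\
  (exists lmax : C, eigenvalue P lmax /\
     (forall mu, eigenvalue P mu -> mu <= lmax) /\ 1 < lmax).
Proof.
move=> hP hd [i0 [j0 [ij Pij]]].
have [rs rsE] := closed_field_poly_normal (char_poly P).
rewrite (monicP (char_poly_monic P)) scale1r in rsE.
have eigE mu : eigenvalue P mu = (mu \in rs).
  by rewrite eigenvalue_root_char rsE root_prod_XsubC.
have szrs : size rs = m.+1.
  by have := size_char_poly P; rewrite rsE size_prod_XsubC => -[].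
have rsreal : all (fun x => x \is Num.real) rs.
  apply/allP => x xr; rewrite CrealE; apply/eqP; apply: (herm_real hP).
  by rewrite eigE.
have rs0 : rs != [::] by rewrite -size_eq0 szrs.
have sumrs : \sum_(z <- rs) z = m.+1%:R.
  have h1 := char_poly_trace P (ltn0Sn m); rewrite /= in h1.
  have h2 : (\prod_(z <- rs) ('X - z%:P))`_m = - \sum_(z <- rs) z.
    by rewrite -[m]/((m.+1).-1) -szrs coefPn_prod_XsubC // szrs.
  rewrite -rsE h1 in h2.
  move/oppr_inj: h2 => <-; rewrite /mxtrace.
  by under eq_bigr do rewrite hd; rewrite sumr_const card_ord.
have sum1 : \sum_(z <- rs) (1 : C) = m.+1%:R.
  by rewrite big_const_seq count_predT iter_addr_0 szrs.
have allz : (forall z, z \in rs -> 1 <= z) \/ (forall z, z \in rs -> z <= 1) ->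
    forall z, z \in rs -> z = 1.
  case=> h.
    have : \sum_(z <- rs) (z - 1) == 0 by rewrite sumrB sumrs sum1 subrr.
    rewrite big_seq psumr_eq0; last by move=> z zs; rewrite subr_ge0 h.
    by move=> /allP hz z zs; move: (hz z zs); rewrite zs /= subr_eq0 => /eqP.
  have : \sum_(z <- rs) (1 - z) == 0 by rewrite sumrB sumrs sum1 subrr.
  rewrite big_seq psumr_eq0; last by move=> z zs; rewrite subr_ge0 h.
  by move=> /allP hz z zs; move: (hz z zs); rewrite zs /= subr_eq0 => /eqP <-.
have contra1 : (forall z, z \in rs -> 1 <= z) \/ (forall z, z \in rs -> z <= 1) -> False.
  move=> /allz h.
  have cpE : char_poly P = ('X - 1%:P) ^+ m.+1.
    rewrite rsE (eq_big_seq (fun=> 'X - 1%:P)); last by move=> z /h ->.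
    by rewrite big_const_seq count_predT iter_mulr_1 szrs.
  have := Cayley_Hamilton P; rewrite cpE rmorphXn rmorphB /= horner_mx_X horner_mx_C.
  move=> /herm_nil h0.
  have hPe i j : Num.conj (P j i) = P i j by rewrite -adjmxE hP.
  have : P - 1%:M = 0.
    apply: h0; apply/matrixP => i j; rewrite adjmxE !mxE rmorphB /= hPe.
    by rewrite rmorphMn rmorph1 eq_sym.
  move/matrixP => /(_ i0 j0); rewrite !mxE (negbTE ij) mulr0n subr0 => /eqP.
  by rewrite (negbTE Pij).
split.
  have [x xs xm] := seq_min rs0 rsreal.
  have xr : x \is Num.real by apply: (allP rsreal).
  exists x; split; first by rewrite eigE.
  split; first by move=> mu; rewrite eigE => /xm.
  case/orP: (real_leVge xr (real1 _)) => h.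
    rewrite lt_neqAle h andbT; apply/eqP => x1; apply: contra1; left.
    by move=> z /xm; rewrite x1.
  by exfalso; apply: contra1; left => z /xm; apply: le_trans.
have [x xs xm] := seq_max rs0 rsreal.
have xr : x \is Num.real by apply: (allP rsreal).
exists x; split; first by rewrite eigE.
split; first by move=> mu; rewrite eigE => /xm.
case/orP: (real_leVge xr (real1 _)) => h.
  by exfalso; apply: contra1; right => z /xm zx; apply: le_trans h.
rewrite lt_neqAle h andbT; apply/eqP => x1; apply: contra1; right.
by move=> z /xm; rewrite x1.
Qed.
End LA2.


Section Final.
Variable R : realType.
Local Notation C := (R[i]).

Lemma Sval n k (x : C) : (1 <= k)%N -> (k < n)%N -> x ^+ n = 1 ->
  x ^+ (betaD n k) * \sum_(s < n) (inS n k s)%:R * x ^+ s = \sum_(t < k) x ^+ t.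
Proof.
move=> k1 kn xn; rewrite /inS sumS //; last by rewrite /betaD subnKC ?alpha_le // ltnW.
by rewrite /betaD subnKC ?alpha_le.
Qed.

Lemma rowsubE n k (f : 'I_k -> 'I_n) (A : 'M[C]_(n, k)) i j :
  (rowsub f A *m adjmx (rowsub f A)) i j = (A *m adjmx A) (f i) (f j).
Proof. by rewrite !mxE; apply: eq_bigr => c _; rewrite !adjmxE !mxE. Qed.

Lemma Kval n k : (0 < k)%N -> (k < n)%N ->
  (Num.sqrt (n%:R / k%:R : R)) ^+ 2 * (Num.sqrt (n%:R : R))^-1 ^+ 2 = k%:R^-1.
Proof.
move=> k0 kn; have n0 : (0 < n)%N by apply: leq_trans kn.
rewrite sqrt_inv2 // sqr_sqrtr ?divr_ge0 ?ler0n //.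
have nR : (n%:R : R) != 0 by rewrite pnatr_eq0 -lt0n.
by rewrite mulrAC mulfV // mul1r.
Qed.

Lemma main_thm (n k : nat)
  (hk : (1 <= k)%N) (hkn : (k < n)%N)
  (hndiv : forall M : nat, (0 < M)%N -> n <> (M * k)%N)
  (f : 'I_k -> 'I_n) (finj : injective f) :
  let Gk := rowsub f (Gmx R n k) in
  let P := Gk *m adjmx Gk in
  (exists lmin : R[i], eigenvalue P lmin /\
     (forall mu, eigenvalue P mu -> lmin <= mu) /\ lmin < 1) /\
  (exists lmax : R[i], eigenvalue P lmax /\
     (forall mu, eigenvalue P mu -> mu <= lmax) /\ 1 < lmax).
Proof.
case: k hk hkn hndiv f finj => [//|m] hk hkn hndiv f finj Gk P.
have n0 : (0 < n)%N by apply: leq_trans hkn.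
have PE i j : P i j = (m.+1%:R^-1)%:C *
    \sum_(s < n) (inS n m.+1 s)%:R * xx R n (f j) (f i) ^+ s.
  by rewrite /P /Gk rowsubE GGE // Kval.
have kR : (m.+1%:R : R) != 0 by rewrite pnatr_eq0.
apply: LA.
- by rewrite /P adjmx_mul adjmxK.
- move=> i; rewrite PE.
  have x1 : xx R n (f i) (f i) = 1 by rewrite /xx om_unit.
  have := Sval (x := xx R n (f i) (f i)) hk hkn (xx_l _ _ _ n0).
  rewrite x1 expr1n mul1r => ->.
  under eq_bigr do rewrite expr1n.
  rewrite sumr_const card_ord -(rmorph_nat (real_complex R)) -rmorphM /=.
  by rewrite mulVf.
have [/existsP [i /existsP [j /andP [ij Pij]]]|hno] :=
  boolP [exists i, exists j, (i != j) && (P i j != 0)]; first by exists i, j.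
exfalso; apply: (comb finj (ltn0Sn m) hkn hndiv) => i j.
case: (eqVneq i j) => [->//|ij].
have Pij : P i j = 0.
  apply/eqP; apply: contraNT hno => h.
  by apply/existsP; exists i; apply/existsP; exists j; rewrite ij h.
move: Pij; rewrite PE => /eqP; rewrite mulf_eq0.
have -> : ((m.+1%:R : R)^-1)%:C == 0 = false.
  by apply/negbTE; rewrite -(rmorph0 (real_complex R)) (inj_eq (@complexI _)) invr_eq0.
rewrite /= => /eqP hs.
have := Sval (x := xx R n (f j) (f i)) hk hkn (xx_l _ _ _ n0).
rewrite hs mulr0 => /esym hs2.
have := subrX1 (xx R n (f j) (f i)) m.+1; rewrite hs2 mulr0 => /eqP.
rewrite subr_eq0 xxX xx1 // => /eqP.
by move=> ->.
Qed.
End Final.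

Local Close Scope complex_scope.
Unset Implicit Arguments.

Theorem theorem2 (R : realType) (n k : nat)
  (hk : (1 <= k)%N) (hkn : (k < n)%N)
  (hnoteven : ~~ (~~ odd n && ~~ odd k))
  (hndiv : forall M : nat, (0 < M)%N -> n <> (M * k)%N)
  (f : 'I_k -> 'I_n) (finj : injective f) :
  let Gk := rowsub f (Gmx R n k) in
  let P := Gk *m adjmx Gk in
  (exists lmin : R[i], eigenvalue P lmin /\
     (forall mu, eigenvalue P mu -> lmin <= mu) /\ lmin < 1) /\
  (exists lmax : R[i], eigenvalue P lmax /\
     (forall mu, eigenvalue P mu -> mu <= lmax) /\ 1 < lmax).
Proof. exact: (@main_thm R n k hk hkn hndiv f finj). Qed.
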